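(* Let $m,n\ge 3$ be integers. If $m$ and $n$ are both even, then $\chi_{ei}(C_m\square C_n)=2$. If $m\ge 4$, $m\notin\{5,7\}$, $n$ is odd and $n\ge 9$, then $\chi_{ei}(C_m\square C_n)=3$.
   Context: All graphs are finite and simple. $C_k$ denotes the cycle on $k$ vertices. A path $P_4$ in $G$ is a sequence $uxyv$ of four distinct vertices with $ux,xy,yv\in E(G)$; $u,v$ are its end vertices. An $e$-injective $k$-coloring of $G$ is a function $f:V(G)\to\{1,\dots,k\}$ with $f(u)\ne f(v)$ whenever $u,v$ are the end vertices of some path $P_4$ in $G$; $\chi_{ei}(G)$ is the least such $k$. In the Cartesian product $G\square H$ two vertices are adjacent if they are adjacent in one coordinate and equal in the other. *)

(* Defs.v *)
From mathcomp Require Import all_boot.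
Set Implicit Arguments. Unset Strict Implicit. Unset Printing Implicit Defensive.

Definition cycle_rel (k : nat) : rel 'I_k :=
  fun i j => ((i.+1 %% k) == j) || ((j.+1 %% k) == i).

Definition cart_rel (A B : finType) (eA : rel A) (eB : rel B) : rel (A * B) :=
  fun p q => (eA p.1 q.1 && (p.2 == q.2)) || ((p.1 == q.1) && eB p.2 q.2).

Definition P4_ends (T : finType) (e : rel T) (u v : T) : Prop :=
  exists x y : T, [/\ uniq [:: u; x; y; v], e u x, e x y & e y v].

Definition ei_coloring (T : finType) (e : rel T) (k : nat) (f : T -> 'I_k) : Prop :=
  forall u v : T, P4_ends e u v -> f u <> f v.

Definition ei_colorable (T : finType) (e : rel T) (k : nat) : Prop :=
  exists f : T -> 'I_k, ei_coloring e f.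

Definition chi_ei_eq (T : finType) (e : rel T) (k : nat) : Prop :=
  ei_colorable e k /\ forall k', k' < k -> ~ ei_colorable e k'.

Definition torus_rel (m n : nat) : rel ('I_m * 'I_n) :=
  cart_rel (@cycle_rel m) (@cycle_rel n).
Arguments torus_rel : clear implicits.

(* Main.v *)
Require Import Defs.
From mathcomp Require Import all_boot zify.

Definition R9 (s t : nat) : bool := (t == (s+1) %% 9) || (t == (s+8) %% 9).
Lemma R9_sym s t : s < 9 -> R9 s t -> R9 t s.
Proof. rewrite /R9 => hs /orP[]/eqP ->; apply/orP; [right|left]; apply/eqP; lia. Qed.
Lemma R9_shift a b c : R9 a b -> R9 ((a + c) %% 9) ((b + c) %% 9).
Proof. rewrite /R9 => /orP[]/eqP ->; apply/orP; [left|right]; apply/eqP; lia. Qed.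

Definition walk (k i : nat) : nat :=
  if odd k then (if i < 9 then i else (i - 9) %% 2) else i %% 2.
Lemma walk_lt k i : walk k i < 9.
Proof. rewrite /walk; case: ifP => _; [case: ifP => // _|]; lia. Qed.

Ltac solR := apply/orP; first [left; apply/eqP; lia | right; apply/eqP; lia].

Lemma walk_ok k i : 2 <= k -> (odd k -> 9 <= k) -> i < k ->
  R9 (walk k i) (walk k (i.+1 %% k)).
Proof.
move=> h2 h9 hi; have hk := odd_double_half k.
have hi2 := odd_double_half i.
rewrite /walk /R9; case: (ltnP i.+1 k) => h.
  rewrite modn_small //; case: ifP => ho; rewrite ho in hk; rewrite -mul2n in hk.
    have {}h9 := h9 ho.
    case: ifP => h1; case: ifP => h1'; try solR.
    case: (boolP (odd i)) => oi; rewrite ?oi ?(negbTE oi) -mul2n in hi2; solR.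
  case: (boolP (odd i)) => oi; rewrite ?oi ?(negbTE oi) -mul2n in hi2; solR.
have ei : i.+1 = k by lia.
rewrite ei modnn; case: ifP => ho; rewrite ho in hk; rewrite -mul2n in hk.
  have {}h9 := h9 ho.
  case: ifP => h1; solR.
solR.
Qed.

Definition hn (t : nat) : nat := nth 0 [:: 0; 2; 0; 1; 0; 1; 2; 1; 2] t.
Lemma hn_lt t : hn t < 3.
Proof. by do 9?[case: t => [|t] //]; rewrite /hn /= nth_nil. Qed.

Lemma key s t1 t2 t3 : s < 9 -> R9 s t1 -> R9 t1 t2 -> R9 t2 t3 -> hn s != hn t3.
Proof.
move=> hs; do 9?[case: s hs => [|s] hs //];
  by move=> /orP[]/eqP-> /orP[]/eqP-> /orP[]/eqP->.
Qed.

Definition S9 m n (p : 'I_m * 'I_n) : nat := (walk m p.1 + walk n p.2) %% 9.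
Arguments S9 {m n}.

Lemma cyc_R k (i j : 'I_k) : 2 <= k -> (odd k -> 9 <= k) -> cycle_rel i j ->
  R9 (walk k i) (walk k j).
Proof.
move=> h2 h9 /orP[]/eqP e.
  by rewrite -e; apply: walk_ok.
apply: R9_sym; first exact: walk_lt.
by rewrite -e; apply: walk_ok.
Qed.

Lemma edge_R m n p q : 2 <= m -> (odd m -> 9 <= m) -> 2 <= n -> (odd n -> 9 <= n) ->
  torus_rel m n p q -> R9 (S9 p) (S9 q).
Proof.
move=> hm1 hm2 hn1 hn2; case: p => i j; case: q => i' j'.
rewrite /torus_rel /cart_rel /S9 /= => /orP[]/andP[].
  by move=> c /eqP <-; apply: R9_shift; apply: cyc_R.
move=> /eqP <- c; rewrite ![walk m i + _]addnC; apply: R9_shift; exact: cyc_R.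
Qed.

Lemma color3 m n : 2 <= m -> (odd m -> 9 <= m) -> 2 <= n -> (odd n -> 9 <= n) ->
  ei_colorable (torus_rel m n) 3.
Proof.
move=> hm1 hm2 hn1 hn2.
exists (fun p => inord (hn (S9 p))) => u v [x [y [_ e1 e2 e3]]] /(congr1 val).
rewrite /= !inordK ?hn_lt //; apply/eqP; apply: key.
- by rewrite /S9 ltn_mod.
- exact: edge_R e1.
- exact: edge_R e2.
- exact: edge_R e3.
Qed.

Lemma widen_col (T : finType) (e : rel T) k k2 : ei_colorable e k -> k <= k2 -> ei_colorable e k2.
Proof.
move=> [f hf] hk; exists (fun x => widen_ord hk (f x)) => u v huv /(congr1 val) /= h.
by apply: (hf u v huv); apply: val_inj.
Qed.


Lemma row_neq m' n' k (f : 'I_m'.+1 * 'I_n'.+1 -> 'I_k) (j1 j2 : 'I_n'.+1) : 2 <= m' ->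
  ei_coloring (torus_rel m'.+1 n'.+1) f -> cycle_rel j1 j2 -> j1 != j2 ->
  f (inord 0, j1) <> f (inord 0, j2).
Proof.
move=> hm hf c ne; apply: hf.
have o01 : (inord 0 : 'I_m'.+1) != inord 1.
  apply/eqP => /(congr1 val); rewrite /= !inordK //; try lia.
have c01 : cycle_rel (inord 0 : 'I_m'.+1) (inord 1).
  rewrite /cycle_rel !inordK ?modn_small //; lia.
have c10 : cycle_rel (inord 1 : 'I_m'.+1) (inord 0).
  rewrite /cycle_rel !inordK ?modn_small //; lia.
exists (inord 1, j1), (inord 1, j2); split.
- have o10 : (inord 1 : 'I_m'.+1) != inord 0 by rewrite eq_sym.
  by rewrite /= !inE !xpair_eqE !eqxx (negbTE o01) (negbTE o10) (negbTE ne).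

- by rewrite /torus_rel /cart_rel /=; apply/orP; left; apply/andP; split.
- by rewrite /torus_rel /cart_rel /=; apply/orP; right; apply/andP; split.
- by rewrite /torus_rel /cart_rel /=; apply/orP; left; apply/andP; split.
Qed.

Lemma not2 m' n' : 2 <= m' -> 2 <= n' -> ~~ odd n' ->
  ~ ei_colorable (torus_rel m'.+1 n'.+1) 2.
Proof.
move=> hm hn ev [f hf].
pose c j := nat_of_ord (f (inord 0, inord j)).
have c2 j : c j < 2 by rewrite /c ltn_ord.
have step j : j < n' -> c j.+1 <> c j.
  move=> hj e; apply: (@row_neq m' n' _ f (inord j) (inord j.+1) hm hf).
  - by rewrite /cycle_rel; apply/orP; left; rewrite !inordK ?modn_small //; lia.
  - by apply/eqP => /(congr1 val); rewrite /= !inordK //; lia.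
  - by apply: val_inj; rewrite /=; rewrite -/(c j) -/(c j.+1).
have wrap : c n' <> c 0.
  move=> e; apply: (@row_neq m' n' _ f (inord n') (inord 0) hm hf).
  - by rewrite /cycle_rel !inordK ?modnn ?eqxx //; lia.
  - by apply/eqP => /(congr1 val); rewrite /= !inordK //; lia.
  - by apply: val_inj; rewrite /=; rewrite -/(c 0) -/(c n').
have par j : j <= n' -> odd (c j) = odd (c 0) (+) odd j.
  elim: j => [|j IH] hj; first by rewrite addbF.
  have := step j hj; have := c2 j; have := c2 j.+1; move=> h1 h2 h3.
  have -> : c j.+1 = 1 - c j by lia.
  move: (IH (ltnW hj)); case: (c j) h2 => [|[|//]] _ /=; rewrite ?subn0;
    by case: (odd (c 0)); case: (odd j).
have := par n' (leqnn _); rewrite (negbTE ev) addbF.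
have := c2 n'; have := c2 0; move: wrap; case: (c n') => [|[|//]]; case: (c 0) => [|[|//]] //.
Qed.

Lemma not1 m' n' : 2 <= m' -> 2 <= n' -> ~ ei_colorable (torus_rel m'.+1 n'.+1) 1.
Proof.
move=> hm hn [f hf].
apply: (@row_neq m' n' _ f (inord 0) (inord 1) hm hf).
- by rewrite /cycle_rel; apply/orP; left; rewrite !inordK ?modn_small //; lia.
- by apply/eqP => /(congr1 val); rewrite /= !inordK //; lia.
- case: (f (inord 0, inord 0)) => [[|//] ?]; case: (f (inord 0, inord 1)) => [[|//] ?]; exact: val_inj.
Qed.

Lemma not_small m' n' k : 2 <= m' -> 2 <= n' -> k < 2 -> ~ ei_colorable (torus_rel m'.+1 n'.+1) k.
Proof. by move=> hm hn hk /widen_col /(_ hk); apply: not1. Qed.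

Lemma par_ok k i : ~~ odd k -> i < k -> odd (i.+1 %% k) = ~~ odd i.
Proof.
move=> ev hi; case: (ltnP i.+1 k) => h; first by rewrite modn_small.
have ei : i.+1 = k by lia.
by rewrite ei modnn /=; move: ev; rewrite -ei /= negbK => ->.
Qed.

Lemma cyc_par k (i j : 'I_k) : ~~ odd k -> cycle_rel i j -> odd j = ~~ odd i.
Proof.
move=> ev /orP[]/eqP e; first by rewrite -e par_ok.
by rewrite -e par_ok ?negbK.
Qed.

Lemma edge_par m n (p q : 'I_m * 'I_n) : ~~ odd m -> ~~ odd n -> torus_rel m n p q ->
  odd (q.1 + q.2) = ~~ odd (p.1 + p.2).
Proof.
move=> em en; case: p => i j; case: q => i' j'.
rewrite /torus_rel /cart_rel /= => /orP[]/andP[].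
  by move=> c /eqP <-; rewrite !oddD (@cyc_par _ _ _ em c); case: (odd i); case: (odd j).
by move=> /eqP <- c; rewrite !oddD (@cyc_par _ _ _ en c); case: (odd i); case: (odd j).
Qed.

Lemma color2 m n : ~~ odd m -> ~~ odd n -> ei_colorable (torus_rel m n) 2.
Proof.
move=> em en.
exists (fun p : 'I_m * 'I_n => inord (odd (p.1 + p.2))) => u v [x [y [_ e1 e2 e3]]] /(congr1 val).
rewrite /= !inordK ?leq_b1 //.
rewrite (@edge_par _ _ _ _ em en e3) (@edge_par _ _ _ _ em en e2) (@edge_par _ _ _ _ em en e1).
all: by case: (odd _).
Qed.

Theorem theorem4p10 (m n : nat) :
  3 <= m -> 3 <= n ->
  (~~ odd m -> ~~ odd n -> chi_ei_eq (torus_rel m n) 2) /\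
  (4 <= m -> m != 5 -> m != 7 -> odd n -> 9 <= n -> chi_ei_eq (torus_rel m n) 3).
Proof.
case: m => [//|m']; case: n => [//|n'] hm hn; split.
  move=> em en; split; first exact: color2.
  by move=> k hk; apply: not_small.
move=> h4 h5 h7 on h9; split.
  apply: color3; [lia| |lia|by move=> _; lia]; move=> om; move: h5 h7; have := odd_double_half m'.+1; rewrite om -mul2n.
  lia.
move=> k; rewrite ltnS leq_eqVlt => /orP[/eqP ->|hk].
  by apply: not2 => //.
exact: not_small.
Qed.
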